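(* Let $n\geq 2$ be an integer. Then \[ s^n+s^{-n}+n(s+s^{-1})\equiv(1+s)^4 r_n(s) \pmod 2\] for some integer Laurent polynomial $r_n(s)\in\mathbb{Z}[s,s^{-1}]$ such that $r_n(1)=n/2$ if $n$ is even and $r_n(1)=0$ if $n$ is odd.
   Context: Congruence modulo $2$ of integer Laurent polynomials means equality of their images in $\mathbb{Z}_2[s,s^{-1}]$ (coefficients reduced mod 2). *)

(* Defs.v *)
From HB Require Import structures.
From mathcomp Require Import all_boot all_order all_algebra.
Set Implicit Arguments. Unset Strict Implicit. Unset Printing Implicit Defensive.
Import Order.TTheory GRing.Theory Num.Theory.
Local Open Scope ring_scope.

(* An integer Laurent polynomial is represented by a pair (k, p) with
   k : nat and p : {poly int}, standing for s^(-k) * p(s).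
   Every element of Z[s,s^-1] has such a representation. *)
Definition laurent := (nat * {poly int})%type.

Definition lconst (c : int) : laurent := (0%N, c%:P).
Definition lXn (m : nat) : laurent := (0%N, 'X^m).
Definition lXinvn (m : nat) : laurent := (m, 1).

Definition ladd (L1 L2 : laurent) : laurent :=
  (((fst L1) + (fst L2))%N, 'X^(fst L2) * (snd L1) + 'X^(fst L1) * (snd L2)).
Definition lmul (L1 L2 : laurent) : laurent :=
  (((fst L1) + (fst L2))%N, (snd L1) * (snd L2)).

Definition leval (x : rat) (L : laurent) : rat :=
  (map_poly (fun z : int => z%:~R) (snd L)).[x] / x ^+ (fst L).

(* Congruence modulo 2: equality of images in Z_2[s,s^-1].  Since
   s^(-k1) p1 = s^(-k2) p2 in F_2[s,s^-1] iff s^k2 p1 = s^k1 p2 in F_2[s],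
   we compare the reductions of these polynomials. *)
Definition red2 (p : {poly int}) : {poly 'F_2} :=
  map_poly (fun z : int => z%:~R) p.
Definition lcong2 (L1 L2 : laurent) : Prop :=
  red2 ('X^(fst L2) * (snd L1)) = red2 ('X^(fst L1) * (snd L2)).

(* Main.v *)
Require Import Defs.
From HB Require Import structures.
From mathcomp Require Import all_boot all_order all_algebra.
From mathcomp Require Import ring zify.
Import Order.TTheory GRing.Theory Num.Theory.
Local Open Scope ring_scope.

Lemma key (R : comNzRingType) (two0 : 2%:R = 0 :> R) (x y m g : R) :
  (x - 1) * g = x * y - 1 ->
  x * ((y * x * x) * (y * x * x) + 1) + (y * x * x) * ((m + 2%:R) * (x * x + 1))
  = x ^+ 2 * (x * (y * y + 1) + y * (m * (x * x + 1))) + (1 + x) ^+ 4 * (x * g ^+ 2).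
Proof.
move=> hg.
have -> : (1 + x) ^+ 4 * (x * g ^+ 2) = (1 + x) ^+ 2 * x * ((x - 1) * g + 2%:R * g) ^+ 2 by ring.
rewrite hg; apply/eqP; rewrite -subr_eq0; apply/eqP.
set H := - x^+3*y^+2 - x^+3 + y*x^+2*(x^+2+1) - x*(x*(x*y-1+2%:R*g)^+2 + (1+x^+2)*(-(x*y)+2%:R*g*(x*y-1)+2%:R*g^+2)).
transitivity (2%:R * H); first by rewrite /H; ring.
by rewrite two0 mul0r.
Qed.

Lemma two0 : (2%:R : 'F_2) = 0. Proof. by apply/eqP. Qed.
Lemma two0p : (2%:R : {poly 'F_2}) = 0.
Proof. by rewrite -(rmorph_nat (@polyC _)) two0 raddf0. Qed.

Definition Pint (n : nat) : {poly int} :=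
  'X^1 * ('X^n * 'X^n + 'X^0 * 1) + 'X^n * ((n%:Z)%:P * ('X^1 * 'X^1 + 'X^0 * 1)).
Definition F4 : {poly int} := (1 + 'X) * (1 + 'X) * (1 + 'X) * (1 + 'X).

Lemma redP n : red2 (Pint n) =
  'X * ('X^n * 'X^n + 1) + 'X^n * ((n%:R)%:P * ('X * 'X + 1)).
Proof.
rewrite /red2 /Pint !(rmorphD, rmorphM, rmorph1, map_polyXn, map_polyC) /= ?expr0 ?mul1r ?expr1.
rewrite !map_polyX !map_polyXn map_polyC /=. by [].
Qed.

Lemma redF4 : red2 F4 = (1 + 'X) ^+ 4.
Proof. rewrite /red2 /F4 !(rmorphM, rmorphD, rmorph1) /= map_polyX; ring. Qed.

Definition C n := exists (Q : {poly int}) (k : int),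
  red2 (Pint n) = red2 F4 * red2 Q /\ Q.[1] = (if odd n then 0 else (n./2)%:Z) + 2 * k.

Lemma step n (Q : {poly int}) : red2 (Pint n) = red2 F4 * red2 Q ->
  exists Q' : {poly int}, red2 (Pint n.+2) = red2 F4 * red2 Q' /\
     Q'.[1] = Q.[1] + (n.+1)%:R ^+ 2.
Proof.
move=> hQ.
set G : {poly int} := \sum_(i < n.+1) 'X^i.
exists ('X^2 * Q + 'X * G ^+ 2); split.
  have hr : red2 ('X^2 * Q + 'X * G ^+ 2) = 'X^2 * red2 Q + 'X * (red2 G) ^+ 2.
    by rewrite /red2 !expr2 !(rmorphD, rmorphM) /= !map_polyX ?map_polyXn.
  rewrite hr mulrDr mulrA (mulrC (red2 F4)) -mulrA -hQ redF4 !redP.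
  have -> : ('X^(n.+2) : {poly 'F_2}) = ('X^n) * 'X * 'X by rewrite !exprSr.
  have -> : ((n.+2)%:R : 'F_2)%:P = (n%:R)%:P + 2%:R.
    by rewrite -(addn2 n) natrD polyCD (polyC_natr _ 2).
  apply: key; first exact: two0p.
  rewrite /G /red2 rmorph_sum /=.
  under eq_bigr do rewrite map_polyXn.
  by rewrite -subrX1 exprS.
rewrite !hornerE horner_sum.
under eq_bigr do rewrite hornerXn expr1n.
by rewrite sumr_const card_ord.
Qed.

Lemma stepC n : C n -> C n.+2.
Proof.
move=> [Q [k [hQ hv]]].
have [Q2 [h1 h2]] := step n Q hQ.
rewrite /C; have hn := odd_double_half n.
set a := n./2 in hn *.
have -> : n.+2./2 = a.+1 by [].
have -> : odd n.+2 = odd n by rewrite /= negbK.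
case ho: (odd n) hv hn => hv hn.
  exists Q2, (k + 2 * (a.+1)%:Z ^+ 2); split => //.
  rewrite h2 hv -hn. nia.
exists Q2, (k + 2 * a%:Z ^+ 2 + 2 * a%:Z); split => //.
rewrite h2 hv -hn. nia.
Qed.

Lemma C0 : C 0.
Proof.
exists 0, 0; split; last by rewrite horner0.
rewrite redP expr0 !mul1r /red2 !rmorph0 mulr0.
by rewrite mul0r addr0 -mulr2n two0p mulr0.
Qed.

Lemma C1 : C 1.
Proof.
exists 0, 0; split; last by rewrite horner0.
rewrite redP expr1 polyC1 mul1r /red2 !rmorph0 mulr0.
transitivity (2%:R * ('X * ('X * 'X + 1)) : {poly 'F_2}); first by ring.
by rewrite two0p mul0r.
Qed.

Lemma Call n : C n /\ C n.+1.
Proof.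
elim: n => [|n [IH1 IH2]]; first by split; [exact: C0 | exact: C1].
by split => //; apply: stepC.
Qed.

Lemma red2M p q : red2 (p * q) = red2 p * red2 q.
Proof. exact: rmorphM. Qed.

Lemma red2C2 p k : red2 (p - (2 * k)%:P) = red2 p.
Proof.
rewrite /red2 raddfB /=. rewrite map_polyC /= intrM (_ : (2%:~R : 'F_2) = 0) //.
  by rewrite mul0r polyC0 subr0.
by apply/eqP.
Qed.

Theorem lemma3p12 (n : nat) (hn : (2 <= n)%N) :
  exists r : laurent,
    lcong2
      (ladd (ladd (lXn n) (lXinvn n))
            (lmul (lconst n%:Z) (ladd (lXn 1) (lXinvn 1))))
      (lmul (lmul (lmul (lmul (ladd (lconst 1) (lXn 1)) (ladd (lconst 1) (lXn 1)))
                        (ladd (lconst 1) (lXn 1))) (ladd (lconst 1) (lXn 1))) r)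
    /\ leval 1 r = (if ~~ odd n then n%:R / 2 else 0).
Proof.
have [[Q [k [hQ hv]]] _] := Call n.
exists ((n + 1)%N, Q - (2 * k)%:P); split.
  rewrite /lcong2 /ladd /lmul /lconst /lXn /lXinvn /=.
  rewrite !add0n ?addn0 (_ : 'X^0 * 1%:P + 'X^0 * 'X^1 = 1 + 'X :> {poly int}); last by rewrite expr0 !mul1r expr1.
  rewrite /red2 rmorphM [in RHS]rmorphM; congr (_ * _).
  change (red2 (Pint n) = red2 (F4 * (Q - (2*k)%:P))).
  by rewrite hQ red2M red2C2.
rewrite /leval /=.
have h := @horner_map _ rat intr (Q - (2*k)%:P) 1.
rewrite rmorph1 in h.
rewrite h expr1n divr1 !hornerE hv addrK.
have hn2 := odd_double_half n.
case ho: (odd n) hn2 => /= hn2; first by [].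
rewrite -[in RHS]hn2 add0n -muln2 natrM mulfK //.
Qed.
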